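(* Let $G_1=(V_1,E_1)$ and $G_2=(V_2,E_2)$ be graphs such that $V_1\cap V_2$ induces a clique in both $G_1$ and $G_2$ and $|V_1\cap V_2|=k\le 3$, and let $G=(V_1\cup V_2,E_1\cup E_2)$ (their clique $k$-sum). Then $\kappa(G)=\max(\kappa(G_1),\kappa(G_2))$.
   Context: For a graph $G=([n],E)$ and $w\in\mathbb{R}^E$, let $\mathrm{ip}(G,w)=\max_{x\in\{\pm1\}^n}\sum_{ij\in E}w_{ij}x_ix_j$ and $\mathrm{sdp}(G,w)=\max\sum_{ij\in E}w_{ij}u_i^Tu_j$, the maximum over unit vectors $u_1,\dots,u_n\in\mathbb{R}^n$. The Grothendieck constant of $G$ is $\kappa(G)=\sup_{w\in\mathbb{R}^E}\mathrm{sdp}(G,w)/\mathrm{ip}(G,w)$. *)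

(* Defs.v *)
From HB Require Import structures.
From mathcomp Require Import all_boot all_order all_algebra.
From mathcomp Require Import all_classical all_reals ereal.
Set Implicit Arguments. Unset Strict Implicit. Unset Printing Implicit Defensive.
Import Order.TTheory GRing.Theory Num.Theory.
Local Open Scope ring_scope.
Local Open Scope classical_set_scope.

(* A finite simple graph with vertex set V included in the ambient ordinals 'I_N.
   Each (unordered) edge {i,j} is represented exactly once, by the ordered pair
   (i,j) with i < j. *)
Definition graph_wf (N : nat) (V : {set 'I_N}) (E : {set 'I_N * 'I_N}) : Prop :=
  forall p, p \in E -> [/\ (p.1 < p.2)%N, p.1 \in V & p.2 \in V].

Definition is_clique (N : nat) (V : {set 'I_N}) (E : {set 'I_N * 'I_N})
  (S : {set 'I_N}) : Prop :=
  S \subset V /\ forall i j, i \in S -> j \in S -> (i < j)%N -> (i, j) \in E.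

Definition dotv (R : realType) (n : nat) (u v : 'rV[R]_n) : R :=
  \sum_(k < n) u ord0 k * v ord0 k.

Definition ip (R : realType) (N : nat) (V : {set 'I_N}) (E : {set 'I_N * 'I_N})
  (w : 'I_N * 'I_N -> R) : R :=
  sup [set r | exists x : 'I_N -> R,
        (forall i, i \in V -> x i = 1 \/ x i = -1) /\
        r = \sum_(p in E) w p * x p.1 * x p.2].

Definition sdp (R : realType) (N : nat) (V : {set 'I_N}) (E : {set 'I_N * 'I_N})
  (w : 'I_N * 'I_N -> R) : R :=
  sup [set r | exists u : 'I_N -> 'rV[R]_#|V|,
        (forall i, i \in V -> dotv (u i) (u i) = 1) /\
        r = \sum_(p in E) w p * dotv (u p.1) (u p.2)].

(* Grothendieck constant of the graph: sup over weights w with ip(G,w) > 0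
   (i.e. w nonzero on E) of sdp/ip.  Value in the extended reals; equals -oo
   for edgeless graphs (empty supremum). *)
Definition kappa (R : realType) (N : nat) (V : {set 'I_N}) (E : {set 'I_N * 'I_N})
  : \bar R :=
  ereal_sup [set ((sdp V E w / ip V E w)%:E) |
             w in [set w : 'I_N * 'I_N -> R | 0 < ip V E w]].

(* Main.v *)
Require Import Defs.
From HB Require Import structures.
From mathcomp Require Import all_boot all_order all_algebra.
From mathcomp Require Import all_classical all_reals ereal.
From mathcomp Require Import ring lra zify.
Import Order.TTheory GRing.Theory Num.Theory.
Local Open Scope ring_scope.
Set Implicit Arguments. Unset Strict Implicit. Unset Printing Implicit Defensive.

Section Gram.
Variable R : realType.

Lemma dotvE n (u v : 'rV[R]_n) : dotv u v = (u *m v^T) ord0 ord0.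
Proof. rewrite /dotv mxE; apply: eq_bigr => k _; by rewrite mxE. Qed.

Lemma dotvC n (u v : 'rV[R]_n) : dotv u v = dotv v u.
Proof. rewrite /dotv; apply: eq_bigr => k _; exact: mulrC. Qed.

Lemma dotvDl n (u v w : 'rV[R]_n) : dotv (u + v) w = dotv u w + dotv v w.
Proof. rewrite /dotv -big_split; apply: eq_bigr => k _; by rewrite mxE mulrDl. Qed.

Lemma dotvZl n a (u w : 'rV[R]_n) : dotv (a *: u) w = a * dotv u w.
Proof. rewrite /dotv mulr_sumr; apply: eq_bigr => k _; by rewrite mxE mulrA. Qed.

Lemma dotvNl n (u w : 'rV[R]_n) : dotv (- u) w = - dotv u w.
Proof. by rewrite -scaleN1r dotvZl mulN1r. Qed.

Lemma dotvBl n (u v w : 'rV[R]_n) : dotv (u - v) w = dotv u w - dotv v w.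
Proof. by rewrite dotvDl dotvNl. Qed.

Lemma dotv0l n (w : 'rV[R]_n) : dotv 0 w = 0.
Proof. by rewrite /dotv big1 // => k _; rewrite mxE mul0r. Qed.

Lemma dotv0r n (w : 'rV[R]_n) : dotv w 0 = 0.
Proof. by rewrite dotvC dotv0l. Qed.

Lemma dotv_ge0 n (u : 'rV[R]_n) : 0 <= dotv u u.
Proof. by rewrite /dotv; apply: sumr_ge0 => k _; rewrite -expr2 sqr_ge0. Qed.

Lemma dotv_eq0 n (u : 'rV[R]_n) : dotv u u = 0 -> u = 0.
Proof.
move=> H; apply/rowP => k; rewrite mxE.
have P0 : forall i : 'I_n, predT i -> 0 <= u ord0 i * u ord0 i.
  by move=> i _; rewrite -expr2 sqr_ge0.
have := psumr_eq0P P0 H (i:=k) isT.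
by move/eqP; rewrite mulf_eq0 orbb => /eqP.
Qed.

Lemma dotv_row_mx m n (a c : 'rV[R]_m) (b d : 'rV[R]_n) :
  dotv (row_mx a b) (row_mx c d) = dotv a c + dotv b d.
Proof.
rewrite /dotv big_split_ord; congr (_ + _); apply: eq_bigr => k _;
by rewrite ?row_mxEl ?row_mxEr.
Qed.

Lemma dotv_const (x y : R) : dotv (const_mx x : 'rV[R]_1) (const_mx y) = x * y.
Proof. by rewrite /dotv big_ord1 !mxE. Qed.

Lemma dotv_row_mx1 n (x y : R) (b d : 'rV[R]_n) :
  @dotv R n.+1 (row_mx (const_mx x : 'rV[R]_1) b) (row_mx (const_mx y : 'rV[R]_1) d)
  = x * y + dotv b d.
Proof. by rewrite -dotv_const -dotv_row_mx. Qed.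

Lemma dotv_proj n (u v a : 'rV[R]_n) s t :
  dotv (u - s *: a) (v - t *: a) =
  dotv u v - t * dotv u a - s * dotv a v + s * t * dotv a a.
Proof.
rewrite dotvBl dotvZl (dotvC u) (dotvC a) !dotvBl !dotvZl (dotvC v u) (dotvC a u).
rewrite (dotvC v a); ring.
Qed.

Lemma gram k : forall m (f : 'I_k -> 'rV[R]_m),
  exists g : 'I_k -> 'rV[R]_k, forall i j, dotv (g i) (g j) = dotv (f i) (f j).
Proof.
elim: k => [|k IH] m f; first by exists (fun _ => 0) => -[].
set a := f ord0.
set A := dotv a a.
set sq := Num.sqrt A.
have A0 : 0 <= A by apply: dotv_ge0.
have sqE : forall x y, x / sq * (y / sq) = x * y / A.
  by move=> x y; rewrite mulf_div -expr2 sqr_sqrtr.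
pose t i := dotv (f i) a / A.
pose f' (i : 'I_k) := f (lift ord0 i) - t (lift ord0 i) *: a.
have [h Hh] := IH m f'.
pose g (i : 'I_k.+1) : 'rV[R]_k.+1 :=
  row_mx (const_mx (dotv (f i) a / sq) : 'rV[R]_1) (odflt 0 (omap h (unlift ord0 i))).
exists g => i j; rewrite /g dotv_row_mx1 sqE.
have [Aeq0|An0] := eqVneq A 0.
  have a0 : a = 0 by apply: dotv_eq0.
  have fa0 : forall i, dotv (f i) a = 0 by move=> l; rewrite a0 dotv0r.
  have tE : forall i, t i = 0 by move=> l; rewrite /t fa0 mul0r.
  rewrite !fa0 mul0r mul0r add0r.
  case: (unliftP ord0 i) => [i'|] ->; case: (unliftP ord0 j) => [j'|] -> /=.
  - by rewrite Hh /f' !tE !scale0r !subr0.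
  - by rewrite dotv0r -/a a0 dotv0r.
  - by rewrite dotv0l -/a a0 dotv0l.
  - by rewrite dotv0l -/a a0 dotv0l.
case: (unliftP ord0 i) => [i'|] ->; case: (unliftP ord0 j) => [j'|] -> /=.
- rewrite Hh /f' /t dotv_proj -/a -/A.
  rewrite (dotvC (f (lift ord0 j'))).
  by field.
- by rewrite dotv0r addr0 -/a -/A mulfK.
- by rewrite dotv0l addr0 -/A mulrC mulrA mulVf // mul1r dotvC.
- by rewrite dotv0l addr0 -/A mulfK.
Qed.

Lemma pad k d : (k <= d)%N ->
  exists e : 'rV[R]_k -> 'rV[R]_d, forall u v, dotv (e u) (e v) = dotv u v.
Proof.
move=> le.
pose P := \matrix_(t < k, l < d) ((val t == val l)%:R : R).
have PP : P *m P^T = 1%:M.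
  apply/matrixP => i j; rewrite !mxE (bigD1 (widen_ord le i)) //= big1.
    rewrite !mxE /= eqxx mul1r addr0.
    by rewrite eq_sym.
  move=> l ne; rewrite !mxE.
  have : val i != val l by apply: contra ne => /eqP e; apply/eqP/val_inj.
  by move/negbTE ->; rewrite mul0r.
exists (fun u => u *m P) => u v.
by rewrite !dotvE trmx_mul mulmxA -(mulmxA u) PP mulmx1.
Qed.

Lemma transfer N (A : {set 'I_N}) d d' (u : 'I_N -> 'rV[R]_d) : (#|A| <= d')%N ->
  exists u' : 'I_N -> 'rV[R]_d', forall i j, i \in A -> j \in A ->
    dotv (u' i) (u' j) = dotv (u i) (u j).
Proof.
move=> le.
have [->|[x0 Hx0]] := set_0Vmem A.
  by exists (fun _ => 0) => i j; rewrite inE.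
have [g Hg] := gram (fun t : 'I_#|A| => u (enum_val t)).
have [e He] := pad le.
exists (fun i => e (g (enum_rank_in Hx0 i))) => i j Hi Hj.
by rewrite He Hg !enum_rankK_in.
Qed.

End Gram.

Section IP.
Variables (R : realType) (N : nat).
Implicit Types (V : {set 'I_N}) (E : {set 'I_N * 'I_N}) (w : 'I_N * 'I_N -> R).

Definition obj E w (x : 'I_N -> R) := \sum_(p in E) w p * x p.1 * x p.2.
Definition sgnb (b : {ffun 'I_N -> bool}) (i : 'I_N) : R := if b i then 1 else -1.
Definition valid V (x : 'I_N -> R) := forall i, i \in V -> x i = 1 \/ x i = -1.

Lemma obj_eqV V E w x y : graph_wf V E -> {in V, x =1 y} -> obj E w x = obj E w y.
Proof.
move=> wf xy; apply: eq_bigr => p pE; have [_ h1 h2] := wf p pE.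
by rewrite !xy.
Qed.

Lemma valid_sgnb V b : valid V (sgnb b).
Proof. by move=> i _; rewrite /sgnb; case: (b i); [left|right]. Qed.

Lemma valid_sgnbE V x : valid V x -> {in V, x =1 sgnb [ffun i => x i == 1]}.
Proof.
move=> vx i iV; rewrite /sgnb ffunE.
case: (vx i iV) => ->; rewrite ?eqxx //.
have -> : (-1 == 1 :> R) = false by apply/negbTE/eqP => h; lra.
by [].
Qed.

Lemma ipE V E w : graph_wf V E ->
  ip V E w = sup (range (fun b => obj E w (sgnb b))).
Proof.
move=> wf; rewrite /ip; congr sup; apply/seteqP; split => r /=.
  move=> [x [vx ->]]; exists [ffun i => x i == 1] => //.
  by apply: obj_eqV wf _ => i iV; rewrite (valid_sgnbE vx).
by move=> [b _ <-]; exists (sgnb b); split => //; apply: valid_sgnb.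
Qed.

Lemma fin_sup (I : finType) (i0 : I) (F : I -> R) :
  exists i, sup (range F) = F i /\ forall j, F j <= F i.
Proof.
case: (@arg_maxP _ _ _ i0 predT F isT) => i _ Hi.
exists i; split; last by move=> j; exact: Hi.
apply/le_anti/andP; split.
- apply: ge_sup; first by exists (F i); exists i.
  by move=> r [j _ <-]; exact: Hi.
- apply: ub_le_sup; last by exists i.
  by exists (F i) => r [j _ <-]; exact: Hi.
Qed.

Lemma ip_max V E w : graph_wf V E ->
  exists b, ip V E w = obj E w (sgnb b) /\
            forall b', obj E w (sgnb b') <= ip V E w.
Proof.
move=> wf; rewrite ipE //.
have [b [-> Hb]] := fin_sup [ffun => true] (fun b => obj E w (sgnb b)).
by exists b.
Qed.

Lemma ip_ub V E w x : graph_wf V E -> valid V x -> obj E w x <= ip V E w.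
Proof.
move=> wf vx; have [_ [_ H]] := ip_max w wf.
rewrite (obj_eqV w wf (valid_sgnbE vx)); exact: H.
Qed.

Lemma ip_att V E w : graph_wf V E -> exists x, valid V x /\ ip V E w = obj E w x.
Proof.
move=> wf; have [b [H _]] := ip_max w wf.
by exists (sgnb b); split => //; apply: valid_sgnb.
Qed.

Definition flipb (p : 'I_N) (b : {ffun 'I_N -> bool}) : {ffun 'I_N -> bool} :=
  [ffun k => if k == p then ~~ b k else b k].

Lemma flipbK p : involutive (flipb p).
Proof.
move=> b; apply/ffunP => k; rewrite !ffunE.
by case: eqP => //; rewrite negbK.
Qed.

Lemma sum_sgn_pair p q : p != q ->
  \sum_(b : {ffun 'I_N -> bool}) sgnb b p * sgnb b q = 0.
Proof.
move=> pq.
set S := \sum_b _.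
have : S = - S.
  rewrite {1}/S (reindex_inj (inv_inj (flipbK p))) /= -sumrN.
  have qp : (q == p) = false by rewrite eq_sym (negbTE pq).
  apply: eq_bigr => b _; rewrite /sgnb !ffunE eqxx qp.
  by case: (b p); rewrite /= ?mulNr ?opprK.
move=> H; lra.
Qed.

Lemma sum_obj E w : (forall e, e \in E -> e.1 != e.2) ->
  \sum_(b : {ffun 'I_N -> bool}) obj E w (sgnb b) = 0.
Proof.
move=> He; rewrite /obj exchange_big /=.
apply: big1 => p pE.
under eq_bigr do rewrite -mulrA.
by rewrite -mulr_sumr sum_sgn_pair ?mulr0 // He.
Qed.

Lemma wf_neq V E : graph_wf V E -> forall e, e \in E -> e.1 != e.2.
Proof. by move=> wf e eE; have [lt _ _] := wf e eE; rewrite neq_ltn lt. Qed.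

Lemma ip_ge0 V E w : graph_wf V E -> 0 <= ip V E w.
Proof.
move=> wf; have [_ [_ H]] := ip_max w wf.
have : \sum_(b : {ffun 'I_N -> bool}) obj E w (sgnb b) <=
       \sum_(b : {ffun 'I_N -> bool}) ip V E w by apply: ler_sum => b _; exact: H.
rewrite sum_obj; last exact: wf_neq wf.
rewrite sumr_const => h.
have cpos : (0 < #|{ffun 'I_N -> bool}|)%N.
  by apply/card_gt0P; exists [ffun => true].
by move: h; rewrite pmulrn_lge0.
Qed.

Lemma ip0_obj V E w : graph_wf V E -> ip V E w = 0 ->
  forall x, valid V x -> obj E w x = 0.
Proof.
move=> wf i0 x vx.
rewrite (obj_eqV w wf (valid_sgnbE vx)).
set b := [ffun _ => _].
have [_ [_ H]] := ip_max w wf; rewrite i0 in H.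
have P0 : forall b' : {ffun 'I_N -> bool}, predT b' -> 0 <= - obj E w (sgnb b').
  by move=> b' _; rewrite oppr_ge0.
have S0 : \sum_(b' : {ffun 'I_N -> bool}) - obj E w (sgnb b') = 0.
  by rewrite sumrN sum_obj ?oppr0 //; exact: wf_neq wf.
have := psumr_eq0P P0 S0 (i:=b) isT.
by move/eqP; rewrite oppr_eq0 => /eqP.
Qed.

Lemma four_bool (a b c d : bool) :
  ~~ (a && b) -> ~~ (c && d) -> ~~ (a && c) -> ~~ (b && d) -> ~~ (b && c) ->
  1 - (if a then -1 else 1) * (if c then -1 else 1)
    - (if b then -1 else 1) * (if d then -1 else 1)
    + (if a || b then -1 else 1) * (if c || d then -1 else 1)
  = (if a && d then 4 else 0 : R).
Proof. by case: a; case: b; case: c; case: d => //= *; lra. Qed.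

Definition xs (i j : 'I_N) (k : 'I_N) : R := if (k == i) || (k == j) then -1 else 1.

Lemma valid_xs V i j : valid V (xs i j).
Proof. by move=> k _; rewrite /xs; case: ifP; [right|left]. Qed.

Lemma ip0_w V E w : graph_wf V E -> ip V E w = 0 -> forall e, e \in E -> w e = 0.
Proof.
move=> wf i0 e eE.
have O x := ip0_obj wf i0 (x := x).
have H : obj E w (fun _ => 1) - obj E w (xs e.1 e.1) - obj E w (xs e.2 e.2)
   + obj E w (xs e.1 e.2) = w e * 4.
  rewrite /obj -!sumrB -big_split /= (bigD1 e) //= big1 => [|p /andP [pE pe]].
    rewrite /xs !eqxx !orbT !orTb /=.
    have [lt _ _] := wf e eE.
    have ne := wf_neq wf eE.
    rewrite eq_sym (negbTE ne) /=.
    lra.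
  rewrite /xs !orbb -!mulrA -!mulrBr -mulrDr.
  have [ltp _ _] := wf p pE; have [lte _ _] := wf e eE.
  rewrite !mul1r four_bool.
  - have -> : ((p.1 == e.1) && (p.2 == e.2)) = false.
      apply/negbTE; apply: contra pe => /andP [/eqP h1 /eqP h2].
      by apply/eqP; move: h1 h2; case: p {ltp pE} => ? ?; case: e {lte eE} => ? ? /= -> ->.
    by rewrite mulr0.
  - by apply/negP => /andP [/eqP h1 /eqP h2]; move: lte; rewrite -h1 -h2 ltnn.
  - by apply/negP => /andP [/eqP h1 /eqP h2]; move: lte; rewrite -h1 -h2 ltnn.
  - by apply/negP => /andP [/eqP h1 /eqP h2]; move: ltp; rewrite h1 h2 ltnn.
  - by apply/negP => /andP [/eqP h1 /eqP h2]; move: ltp; rewrite h1 h2 ltnn.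
  - apply/negP => /andP [/eqP h1 /eqP h2]; move: ltp lte; rewrite h1 h2 => h3 h4.
    by have := ltn_trans h3 h4; rewrite ltnn.
have v1 : valid V (fun _ : 'I_N => 1) by move=> k _; left.
rewrite !O ?valid_xs // in H.
move: H; rewrite !subr0 addr0 => H; lra.
all: exact: valid_xs.
Qed.

End IP.
Arguments sgnb {R N}.
Arguments xs {R N}.

Section SDP.
Variables (R : realType) (N : nat).
Implicit Types (V : {set 'I_N}) (E : {set 'I_N * 'I_N}) (w : 'I_N * 'I_N -> R).

Lemma unit_dot_bound d (u v : 'rV[R]_d) :
  dotv u u = 1 -> dotv v v = 1 -> `|dotv u v| <= 1.
Proof.
move=> hu hv.
have h1 := dotv_ge0 (u - 1 *: v); have h2 := dotv_ge0 (u - (-1) *: v).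
rewrite dotv_proj hu hv (dotvC v u) in h1.
rewrite dotv_proj hu hv (dotvC v u) in h2.
rewrite ler_norml; apply/andP; split; lra.
Qed.

Definition unitV V d (u : 'I_N -> 'rV[R]_d) := forall i, i \in V -> dotv (u i) (u i) = 1.

Lemma sdp_bnd V E w d (u : 'I_N -> 'rV[R]_d) : graph_wf V E -> unitV V u ->
  \sum_(p in E) w p * dotv (u p.1) (u p.2) <= \sum_(p in E) `|w p|.
Proof.
move=> wf hu; apply: ler_sum => p pE; have [_ h1 h2] := wf p pE.
apply: (le_trans (ler_norm _)); rewrite normrM; apply: ler_piMr => //.
exact: unit_dot_bound (hu _ h1) (hu _ h2).
Qed.

Lemma sdp_ub V E w d (u : 'I_N -> 'rV[R]_d) : graph_wf V E -> unitV V u ->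
  \sum_(p in E) w p * dotv (u p.1) (u p.2) <= sdp V E w.
Proof.
move=> wf hu.
have [u' Hu'] := @transfer R N V d #|V| u (leqnn _).
have -> : \sum_(p in E) w p * dotv (u p.1) (u p.2) =
          \sum_(p in E) w p * dotv (u' p.1) (u' p.2).
  by apply: eq_bigr => p pE; have [_ h1 h2] := wf p pE; rewrite Hu'.
apply: ub_le_sup.
  exists (\sum_(p in E) `|w p|) => r [u'' [hu'' ->]]; exact: (sdp_bnd w wf hu'').
exists u'; split => // i iV; rewrite Hu' //; exact: hu.
Qed.

Lemma sdp_le V E w c : graph_wf V E -> (0 < #|V|)%N ->
  (forall u : 'I_N -> 'rV[R]_#|V|, unitV V u ->
     \sum_(p in E) w p * dotv (u p.1) (u p.2) <= c) -> sdp V E w <= c.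
Proof.
move=> wf Vpos H; apply: ge_sup.
  have [e He] := pad R Vpos.
  exists (\sum_(p in E) w p * dotv (e (const_mx 1)) (e (const_mx 1))).
  exists (fun _ => e (const_mx 1)); split => // i _.
  by rewrite He dotv_const mulr1.
by move=> r [u [hu ->]]; apply: H.
Qed.

End SDP.

Section Decomp.
Variables (R : realType) (N : nat).

Implicit Types (S : {set 'I_N}) (F : {ffun 'I_N -> bool} -> R).

Definition CS (S : {set 'I_N}) :=
  [set p : 'I_N * 'I_N | (p.1 \in S) && (p.2 \in S) && (p.1 < p.2)%N].
Definition sameS (S : {set 'I_N}) (b b' : {ffun 'I_N -> bool}) :=
  (forall i, i \in S -> b i = b' i) \/ (forall i, i \in S -> b i = ~~ b' i).
Definition bt : {ffun 'I_N -> bool} := [ffun => true].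
Definition even_on S (F : {ffun 'I_N -> bool} -> R) :=
  forall b b', sameS S b b' -> F b = F b'.
Definition decomp_on S (F : {ffun 'I_N -> bool} -> R) :=
  exists a (c : 'I_N * 'I_N -> R), forall b,
    F b = a + \sum_(p in CS S) c p * sgnb b p.1 * sgnb b p.2.

Lemma dec0 S F : S = finset.set0 -> even_on S F -> decomp_on S F.
Proof.
move=> -> EF; exists (F bt), (fun _ => 0) => b.
rewrite big1 ?addr0; last by move=> p _; rewrite !mul0r.
by apply: EF; left => i; rewrite inE.
Qed.

Lemma dec1 S F (x : 'I_N) : S = [set x] -> even_on S F -> decomp_on S F.
Proof.
move=> -> EF; exists (F bt), (fun _ => 0) => b.
rewrite big1 ?addr0; last by move=> p _; rewrite !mul0r.
apply: EF; case bx: (b x); [left|right] => i; rewrite inE => /eqP ->;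
by rewrite ffunE bx.
Qed.

Lemma dec2 S F (x y : 'I_N) : (x < y)%N -> S = [set x; y] -> even_on S F -> decomp_on S F.
Proof.
move=> lt SE EF.
have xy : (x == y) = false by apply/eqP => h; move: lt; rewrite h ltnn.
have yx : (y == x) = false by apply/eqP => h; move: lt; rewrite h ltnn.
have CSE : CS S = [set (x, y)].
  apply/setP => -[p1 p2]; rewrite !inE SE !inE /= xpair_eqE.
  apply/idP/idP.
    case/andP => /andP [] /orP [] /eqP -> /orP [] /eqP ->;
    by rewrite ?ltnn ?eqxx //= => /ltn_trans/(_ lt); rewrite ltnn.
  by case/andP => /eqP -> /eqP ->; rewrite !eqxx orbT lt.
set F0 := F bt; set F1 := F (flipb x bt).
exists ((F0 + F1) / 2), (fun _ => (F0 - F1) / 2) => b.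
rewrite CSE big_set1 /= /sgnb.
case bx: (b x); case by_: (b y).
- have -> : F b = F0.
    by apply: EF; left => i; rewrite SE !inE => /orP [] /eqP ->; rewrite ffunE ?bx ?by_.
  lra.
- have -> : F b = F1.
    apply: EF; right => i; rewrite SE !inE => /orP [] /eqP ->;
    by rewrite /flipb !ffunE ?eqxx ?yx ?bx ?by_.
  lra.
- have -> : F b = F1.
    apply: EF; left => i; rewrite SE !inE => /orP [] /eqP ->;
    by rewrite /flipb !ffunE ?eqxx ?yx ?bx ?by_.
  lra.
- have -> : F b = F0.
    by apply: EF; right => i; rewrite SE !inE => /orP [] /eqP ->; rewrite ffunE ?bx ?by_.
  lra.
Qed.

Lemma in3 (i x y z : 'I_N) : (i \in [set x; y; z]) = [|| i == x, i == y | i == z].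
Proof. by rewrite !inE -orbA. Qed.

Lemma dec3 S F (x y z : 'I_N) : (x < y)%N -> (y < z)%N -> S = [set x; y; z] ->
  even_on S F -> decomp_on S F.
Proof.
move=> lxy lyz SE EF; have lxz := ltn_trans lxy lyz.
have xy : (x == y) = false by apply/eqP => h; move: lxy; rewrite h ltnn.
have yx : (y == x) = false by apply/eqP => h; move: lxy; rewrite h ltnn.
have xz : (x == z) = false by apply/eqP => h; move: lxz; rewrite h ltnn.
have zx : (z == x) = false by apply/eqP => h; move: lxz; rewrite h ltnn.
have yz : (y == z) = false by apply/eqP => h; move: lyz; rewrite h ltnn.
have zy : (z == y) = false by apply/eqP => h; move: lyz; rewrite h ltnn.
have CSE : CS S = (x, y) |: ((x, z) |: [set (y, z)]).
  apply/setP => -[p1 p2]; rewrite !inE SE !in3 /= !xpair_eqE.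
  apply/idP/idP.
    case/andP => /andP [] /or3P [] /eqP -> /or3P [] /eqP -> h;
    rewrite ?eqxx /= ?orbT //; exfalso; lia.
  by case/or3P => /andP [/eqP -> /eqP ->]; rewrite !eqxx !orbT /=.
set F0 := F bt; set F1 := F (flipb x bt); set F2 := F (flipb y bt).
set F3 := F (flipb z bt).
exists ((F0 + F1 + F2 + F3) / 4).
exists (fun p => if p == (x, y) then (F0 - F1 - F2 + F3) / 4
                 else if p == (x, z) then (F0 - F1 + F2 - F3) / 4
                 else (F0 + F1 - F2 - F3) / 4) => b.
rewrite CSE big_setU1 /=; last by rewrite !inE !xpair_eqE eqxx yz xy.
rewrite big_setU1 /=; last by rewrite !inE !xpair_eqE xy.
rewrite big_set1 /= !xpair_eqE !eqxx /= ?(xy,yx,xz,zx,yz,zy) /= /sgnb.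
case bx: (b x); case by_: (b y); case bz: (b z).
- have -> : F b = F bt.
    apply: EF; left => i; rewrite SE in3 => /or3P [] /eqP ->;
    by rewrite /flipb /bt !ffunE ?eqxx ?(xy,yx,xz,zx,yz,zy) ?bx ?by_ ?bz.
  rewrite /F0 /F1 /F2 /F3; lra.
- have -> : F b = F (flipb z bt).
    apply: EF; left => i; rewrite SE in3 => /or3P [] /eqP ->;
    by rewrite /flipb /bt !ffunE ?eqxx ?(xy,yx,xz,zx,yz,zy) ?bx ?by_ ?bz.
  rewrite /F0 /F1 /F2 /F3; lra.
- have -> : F b = F (flipb y bt).
    apply: EF; left => i; rewrite SE in3 => /or3P [] /eqP ->;
    by rewrite /flipb /bt !ffunE ?eqxx ?(xy,yx,xz,zx,yz,zy) ?bx ?by_ ?bz.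
  rewrite /F0 /F1 /F2 /F3; lra.
- have -> : F b = F (flipb x bt).
    apply: EF; right => i; rewrite SE in3 => /or3P [] /eqP ->;
    by rewrite /flipb /bt !ffunE ?eqxx ?(xy,yx,xz,zx,yz,zy) ?bx ?by_ ?bz.
  rewrite /F0 /F1 /F2 /F3; lra.
- have -> : F b = F (flipb x bt).
    apply: EF; left => i; rewrite SE in3 => /or3P [] /eqP ->;
    by rewrite /flipb /bt !ffunE ?eqxx ?(xy,yx,xz,zx,yz,zy) ?bx ?by_ ?bz.
  rewrite /F0 /F1 /F2 /F3; lra.
- have -> : F b = F (flipb y bt).
    apply: EF; right => i; rewrite SE in3 => /or3P [] /eqP ->;
    by rewrite /flipb /bt !ffunE ?eqxx ?(xy,yx,xz,zx,yz,zy) ?bx ?by_ ?bz.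
  rewrite /F0 /F1 /F2 /F3; lra.
- have -> : F b = F (flipb z bt).
    apply: EF; right => i; rewrite SE in3 => /or3P [] /eqP ->;
    by rewrite /flipb /bt !ffunE ?eqxx ?(xy,yx,xz,zx,yz,zy) ?bx ?by_ ?bz.
  rewrite /F0 /F1 /F2 /F3; lra.
- have -> : F b = F bt.
    apply: EF; right => i; rewrite SE in3 => /or3P [] /eqP ->;
    by rewrite /flipb /bt !ffunE ?eqxx ?(xy,yx,xz,zx,yz,zy) ?bx ?by_ ?bz.
  rewrite /F0 /F1 /F2 /F3; lra.
Qed.

End Decomp.

Section Decomp2.
Variables (R : realType) (N : nat).
Implicit Types (S : {set 'I_N}) (F : {ffun 'I_N -> bool} -> R).

Lemma dec3_any S F (x y z : 'I_N) : x != y -> x != z -> y != z ->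
  S = [set x; y; z] -> even_on S F -> decomp_on S F.
Proof.
move=> xy xz yz SE EF.
have xy' : (nat_of_ord x <> nat_of_ord y) by move=> e; move/eqP: xy; apply; apply: val_inj.
have xz' : (nat_of_ord x <> nat_of_ord z) by move=> e; move/eqP: xz; apply; apply: val_inj.
have yz' : (nat_of_ord y <> nat_of_ord z) by move=> e; move/eqP: yz; apply; apply: val_inj.
have P3 : forall a b c : 'I_N, (a < b)%N -> (b < c)%N ->
    [set x; y; z] = [set a; b; c] -> decomp_on S F.
  by move=> a b c hab hbc e; apply: (dec3 hab hbc) => //; rewrite SE.
case: (ssrnat.ltngtP x y) => h1; case: (ssrnat.ltngtP x z) => h2;
  case: (ssrnat.ltngtP y z) => h3;
  try (exfalso; lia);
  first [ (apply: (P3 x y z); [lia | lia | ])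
        | (apply: (P3 x z y); [lia | lia | ])
        | (apply: (P3 y x z); [lia | lia | ])
        | (apply: (P3 y z x); [lia | lia | ])
        | (apply: (P3 z x y); [lia | lia | ])
        | (apply: (P3 z y x); [lia | lia | ]) ];
  by apply/setP => i; rewrite !in3; case: (i == x); case: (i == y); case: (i == z).
Qed.

Lemma decomp_small S F : (#|S| <= 3)%N -> even_on S F -> decomp_on S F.
Proof.
move=> le EF.
case: (posnP #|S|) => [/eqP|].
  by rewrite cards_eq0 => /eqP S0; apply: dec0 S0 EF.
move=> /card_gt0P [x Sx].
have SE : S = x |: (S :\ x) by rewrite finset.setD1K.
have xn : x \notin S :\ x by rewrite finset.setD11.
have := cardsD1 x S; rewrite Sx => cS.
have : (#|S :\ x| <= 2)%N by lia.
move=> le2.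
case: (ssrnat.ltngtP #|S :\ x| 1) => [h0|h2|h1].
- have : #|S :\ x| == 0 by lia.
  rewrite cards_eq0 => /eqP S0; apply: (dec1 (x := x)) EF.
  by rewrite SE S0 finset.setU0.
- have : #|S :\ x| == 2 by lia.
  move=> /cards2P [y [z [yz Syz]]]; rewrite Syz in SE xn.
  have xy : x != y by move: xn; rewrite !inE negb_or => /andP [].
  have xz : x != z by move: xn; rewrite !inE negb_or => /andP [].
  apply: (dec3_any xy xz yz) EF; rewrite SE; apply/setP => i; rewrite in3 !inE.
  by case: (i == x); case: (i == y); case: (i == z).
- move: h1 => /eqP /cards1P [y Sy]; rewrite Sy in SE xn.
  have xy : x != y by move: xn; rewrite inE.
  case: (ssrnat.ltngtP x y) => h.
  + by apply: (dec2 h) EF.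
  + apply: (dec2 h) EF; rewrite SE; apply/setP => i; rewrite !inE.
    by case: (i == x); case: (i == y).
  + by exfalso; move/eqP: xy; apply; apply: val_inj.
Qed.

End Decomp2.

Section Split.
Variables (R : realType) (N : nat).
Implicit Types (V : {set 'I_N}) (E : {set 'I_N * 'I_N}) (w : 'I_N * 'I_N -> R).

Lemma sum_mk (A : {set 'I_N * 'I_N}) (F : 'I_N * 'I_N -> R) :
  \sum_(p in A) F p = \sum_p (if p \in A then F p else 0).
Proof. exact: big_mkcond. Qed.

Lemma objE E w x : obj E w x = \sum_(p in E) w p * (x p.1 * x p.2).
Proof. by apply: eq_bigr => p _; rewrite mulrA. Qed.

Lemma sum_eqV V E w (x y : 'I_N -> R) :
  (forall p, p \in E -> (p.1 \in V) && (p.2 \in V)) -> {in V, x =1 y} ->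
  \sum_(p in E) w p * (x p.1 * x p.2) = \sum_(p in E) w p * (y p.1 * y p.2).
Proof.
move=> H xy; apply: eq_bigr => p pE; have /andP [h1 h2] := H p pE.
by rewrite !xy.
Qed.

Definition agree (S : {set 'I_N}) (b b' : {ffun 'I_N -> bool}) :=
  [forall i, (i \in S) ==> (b i == b' i)].

Lemma agreeP (S : {set 'I_N}) (b b' : {ffun 'I_N -> bool}) : reflect (forall i, i \in S -> b i = b' i) (agree S b b').
Proof.
apply: (iffP forallP) => [H i iS|H i]; first by have := H i; rewrite iS => /eqP.
by apply/implyP => iS; rewrite H.
Qed.

Definition negf (b : {ffun 'I_N -> bool}) : {ffun 'I_N -> bool} := [ffun i => ~~ b i].

Lemma sgnb_neg (b : {ffun 'I_N -> bool}) (i : 'I_N) : sgnb (negf b) i = - sgnb b i :> R.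
Proof. by rewrite /sgnb ffunE; case: (b i); rewrite ?opprK. Qed.

Lemma split_ip V1 V2 E1 E2 w :
  graph_wf V1 E1 -> graph_wf V2 E2 ->
  is_clique V1 E1 (V1 :&: V2) -> is_clique V2 E2 (V1 :&: V2) ->
  (#|V1 :&: V2| <= 3)%N ->
  exists w1 w2,
    (forall G : 'I_N * 'I_N -> R, \sum_(p in E1 :|: E2) w p * G p =
        \sum_(p in E1) w1 p * G p + \sum_(p in E2) w2 p * G p) /\
    ip V1 E1 w1 + ip V2 E2 w2 = ip (V1 :|: V2) (E1 :|: E2) w.
Proof.
move=> wf1 wf2 [_ cl1] [_ cl2] card3.
set S := V1 :&: V2; set C := E1 :&: E2.
have wfG : graph_wf (V1 :|: V2) (E1 :|: E2).
  move=> p; rewrite inE => /orP [pE|pE].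
    by have [h1 h2 h3] := wf1 p pE; split => //; rewrite inE ?h2 ?h3.
  by have [h1 h2 h3] := wf2 p pE; split => //; rewrite inE ?h2 ?h3 orbT.
have CSE : C = CS S.
  apply/setP => -[p1 p2]; rewrite /C /CS /S !inE /=; apply/idP/idP.
    case/andP => pE1 pE2; have [lt h1 h2] := wf1 _ pE1; have [_ h3 h4] := wf2 _ pE2.
    by rewrite /= in h1 h2 h3 h4 lt; rewrite h1 h2 h3 h4 lt.
  case/andP => /andP [/andP [a1 a2] /andP [b1 b2]] lt.
  by rewrite cl1 ?cl2 // inE ?a1 ?a2 ?b1 ?b2.
have edgesS : forall p, p \in C -> (p.1 \in S) && (p.2 \in S).
  by move=> p; rewrite CSE inE => /andP [/andP [-> ->]].
have edges1 : forall p, p \in E1 :\: C -> (p.1 \in V1) && (p.2 \in V1).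
  by move=> p; rewrite inE => /andP [_ pE]; have [_ -> ->] := wf1 p pE.
have edges2 : forall p, p \in E2 :\: C -> (p.1 \in V2) && (p.2 \in V2).
  by move=> p; rewrite inE => /andP [_ pE]; have [_ -> ->] := wf2 p pE.
pose f1 (x : 'I_N -> R) := \sum_(p in E1 :\: C) w p * (x p.1 * x p.2).
pose f2 (x : 'I_N -> R) := \sum_(p in E2 :\: C) w p * (x p.1 * x p.2).
pose fc (x : 'I_N -> R) := \sum_(p in C) w p * (x p.1 * x p.2).
pose bs (b : {ffun 'I_N -> bool}) :=
  [arg max_(b' > b | agree S b' b) f1 (sgnb b')]%O.
have bsP : forall b, agree S (bs b) b /\
    forall b', agree S b' b -> f1 (sgnb b') <= f1 (sgnb (bs b)).
  move=> b; rewrite /bs; case: arg_maxP => [|b0 Hb0 Hm].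
    by apply/agreeP.
  by split => // b' h; apply: Hm.
pose H b := f1 (sgnb (bs b)).
have f1neg : forall b, f1 (sgnb (negf b)) = f1 (sgnb b).
  by move=> b; apply: eq_bigr => p _; rewrite !sgnb_neg mulrNN.
have Hle : forall b b', sameS S b b' -> H b <= H b'.
  move=> b b' [hs|hs].
    apply: (proj2 (bsP b')); apply/agreeP => i iS.
    by have /agreeP := (proj1 (bsP b)) => /(_ i iS) ->; rewrite hs.
  rewrite /H -f1neg; apply: (proj2 (bsP b')); apply/agreeP => i iS.
  have /agreeP := (proj1 (bsP b)) => /(_ i iS) e.
  by rewrite /negf ffunE e hs; case: (b' i).
have EH : even_on S H.
  move=> b3 b4 hs; apply/le_anti; rewrite Hle //= Hle //.
  case: hs => hs; [left|right] => i iS; rewrite hs //.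
  by case: (b4 i).
have [a [c Hdec]] := decomp_small card3 EH.
pose w1 p := if p \in C then - c p else w p.
pose w2 p := if p \in C then w p + c p else w p.
have D1 : forall G : 'I_N * 'I_N -> R, \sum_(p in E1 :|: E2) w p * G p =
        \sum_(p in E1) w1 p * G p + \sum_(p in E2) w2 p * G p.
  move=> G; rewrite !sum_mk -big_split; apply: eq_bigr => p _.
  rewrite /w1 /w2 /C !inE.
  by case: (p \in E1); case: (p \in E2) => /=; ring.
have obj1 : forall x, obj E1 w1 x = f1 x - \sum_(p in C) c p * (x p.1 * x p.2).
  move=> x; rewrite objE /f1 -sumrN !sum_mk -big_split; apply: eq_bigr => p _.
  rewrite /w1 /C !inE.
  by case: (p \in E1); case: (p \in E2) => /=; ring.
have obj2 : forall x, obj E2 w2 x = f2 x + fc x + \sum_(p in C) c p * (x p.1 * x p.2).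
  move=> x; rewrite objE /f2 /fc !sum_mk -!big_split; apply: eq_bigr => p _.
  rewrite /w2 /C !inE.
  by case: (p \in E1); case: (p \in E2) => /=; ring.
have objG : forall x, obj (E1 :|: E2) w x = f1 x + f2 x + fc x.
  move=> x; rewrite objE /f1 /f2 /fc !sum_mk -!big_split; apply: eq_bigr => p _.
  rewrite /C !inE.
  by case: (p \in E1); case: (p \in E2) => /=; ring.
have HdecC : forall b, H b = a + \sum_(p in C) c p * (sgnb b p.1 * sgnb b p.2).
  by move=> b; rewrite Hdec CSE; congr (_ + _); apply: eq_bigr => p _; rewrite mulrA.
exists w1, w2; split => //.
apply/le_anti/andP; split.
-
  have ip1a : ip V1 E1 w1 <= a.
    have [b1 [-> _]] := ip_max w1 wf1.
    rewrite obj1; have := HdecC b1.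
    have := proj2 (bsP b1) b1 (introT (agreeP _ _ _) (fun _ _ => erefl)).
    rewrite -/(H b1) => h1 h2; lra.
  have ip2a : ip V2 E2 w2 <= ip (V1 :|: V2) (E1 :|: E2) w - a.
    have [b2 [-> _]] := ip_max w2 wf2.
    pose z : {ffun 'I_N -> bool} := [ffun i => if i \in V1 then bs b2 i else b2 i].
    have zb2 : {in V2, (sgnb z : 'I_N -> R) =1 sgnb b2}.
      move=> i iV2; rewrite /sgnb ffunE; case iV1: (i \in V1) => //.
      have e : bs b2 i = b2 i.
        by apply: (elimT (agreeP _ _ _) (proj1 (bsP b2))); rewrite /S inE iV1 iV2.
      by rewrite e.
    have zbs : {in V1, (sgnb z : 'I_N -> R) =1 sgnb (bs b2)}.
      by move=> i iV1; rewrite /sgnb ffunE iV1.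
    have hz : obj (E1 :|: E2) w (sgnb z) <= ip (V1 :|: V2) (E1 :|: E2) w.
      by have [_ [_ h]] := ip_max w wfG; apply: h.
    rewrite objG in hz.
    have e1 : f1 (sgnb z) = H b2 by apply: (sum_eqV _ edges1 zbs).
    have e2 : f2 (sgnb z) = f2 (sgnb b2) by apply: (sum_eqV _ edges2 zb2).
    have ec : fc (sgnb z) = fc (sgnb b2).
      apply: (sum_eqV (V := V2)) zb2 => p /edgesS /andP [].
      by rewrite /S !inE => /andP [_ ->] /andP [_ ->].
    rewrite e1 e2 ec HdecC in hz.
    rewrite obj2; lra.
  lra.
- have [x [vx ->]] := ip_att w wfG.
  rewrite /obj.
  under eq_bigr do rewrite -mulrA.
  rewrite D1.
  have vx1 : valid V1 x by move=> i iV; apply: vx; rewrite inE iV.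
  have vx2 : valid V2 x by move=> i iV; apply: vx; rewrite inE iV orbT.
  have := ip_ub w1 wf1 vx1; have := ip_ub w2 wf2 vx2.
  rewrite !objE => h2 h1; lra.
Qed.

End Split.

Section Kappa.
Variables (R : realType) (N : nat).
Implicit Types (V : {set 'I_N}) (E : {set 'I_N * 'I_N}) (w : 'I_N * 'I_N -> R).

Lemma ip_pos_edge V E w : graph_wf V E -> 0 < ip V E w -> exists e, e \in E.
Proof.
move=> wf ipos; have [x [_ e]] := ip_att w wf.
case: (set_0Vmem E) => [E0|[x0 h]]; last by exists x0.
by move: ipos; rewrite e /obj E0 big_set0 ltxx.
Qed.

Lemma Vpos V E w : graph_wf V E -> 0 < ip V E w -> (0 < #|V|)%N.
Proof.
move=> wf ipos; have [e eE] := ip_pos_edge wf ipos.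
have [_ h _] := wf e eE; by apply/card_gt0P; exists e.1.
Qed.

Lemma kappa_bound V E w d (u : 'I_N -> 'rV[R]_d) : graph_wf V E -> unitV V u ->
  ((\sum_(p in E) w p * dotv (u p.1) (u p.2))%:E <= kappa R V E * (ip V E w)%:E)%E.
Proof.
move=> wf hu.
have := ip_ge0 w wf; rewrite le_eqVlt => /orP [/eqP i0|ipos].
  rewrite -i0 mule0 big1 // => p pE.
  by rewrite (ip0_w wf (esym i0) pE) mul0r.
have h1 := sdp_ub w wf hu.
have h2 : ((sdp V E w / ip V E w)%:E <= kappa R V E)%E.
  by apply: ereal_sup_ubound; exists w.
apply: (le_trans (y := (sdp V E w)%:E)); first by rewrite lee_fin.
have -> : sdp V E w = sdp V E w / ip V E w * ip V E w by rewrite divfK // gt_eqF.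
rewrite EFinM; apply: lee_wpmul2r => //; rewrite lee_fin; exact: ltW.
Qed.

Lemma kappa_mono V E V' E' : graph_wf V E -> graph_wf V' E' ->
  V \subset V' -> E \subset E' -> (kappa R V E <= kappa R V' E')%E.
Proof.
move=> wf wf' sV sE; apply: ge_ereal_sup => _ [w wpos <-].
pose w' p := if p \in E then w p else 0.
have objeq : forall x, obj E' w' x = obj E w x.
  move=> x; rewrite /obj !sum_mk; apply: eq_bigr => p _; rewrite /w'.
  case pE: (p \in E); first by rewrite (fintype.subsetP sE).
  by case: (p \in E'); rewrite ?mul0r.
have ipeq : ip V' E' w' = ip V E w.
  rewrite !ipE //.
  have -> : (fun b => obj E' w' (sgnb b)) = (fun b => obj E w (sgnb b)) :> (_ -> R).
    by apply: boolp.funext => b; exact: objeq.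
  by [].
have Vp : (0 < #|V|)%N := Vpos wf wpos.
have sdple : sdp V E w <= sdp V' E' w'.
  apply: sdp_le => // u hu.
  have [e He] := pad R Vp.
  pose u2 i := if i \in V then u i else e (const_mx 1).
  have hu2 : unitV V' u2.
    move=> i _; rewrite /u2; case: ifP => iV; first exact: hu.
    by rewrite He dotv_const mulr1.
  have := sdp_ub w' wf' hu2.
  have -> : \sum_(p in E') w' p * dotv (u2 p.1) (u2 p.2) =
            \sum_(p in E) w p * dotv (u p.1) (u p.2).
    rewrite !sum_mk; apply: eq_bigr => p _; rewrite /w'.
    case pE: (p \in E).
      by rewrite (fintype.subsetP sE) //; have [_ h1 h2] := wf p pE; rewrite /u2 h1 h2.
    by case: (p \in E'); rewrite ?mul0r.
  by [].
apply: (le_trans (y := (sdp V' E' w' / ip V' E' w')%:E)).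
  have -> : ip V' E' w' = ip V E w := ipeq.
  rewrite lee_fin; apply: ler_wpM2r => //; rewrite invr_ge0 ltW //.
apply: ereal_sup_ubound; exists w' => //=.
by have -> : ip V' E' w' = ip V E w := ipeq.
Qed.

End Kappa.

Theorem mainTheorem5 (R : realType) (N : nat) (V1 V2 : {set 'I_N})
  (E1 E2 : {set 'I_N * 'I_N}) :
  graph_wf V1 E1 -> graph_wf V2 E2 ->
  is_clique V1 E1 (V1 :&: V2) -> is_clique V2 E2 (V1 :&: V2) ->
  (#|V1 :&: V2| <= 3)%N ->
  kappa R (V1 :|: V2) (E1 :|: E2) = Order.max (kappa R V1 E1) (kappa R V2 E2).
Proof.
move=> wf1 wf2 cl1 cl2 card3.
have wfG : graph_wf (V1 :|: V2) (E1 :|: E2).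
  move=> p; rewrite inE => /orP [pE|pE].
    by have [h1 h2 h3] := wf1 p pE; split => //; rewrite inE ?h2 ?h3.
  by have [h1 h2 h3] := wf2 p pE; split => //; rewrite inE ?h2 ?h3 orbT.
apply/le_anti/andP; split; last first.
  rewrite ge_max; apply/andP; split; apply: kappa_mono => //;
  by rewrite ?finset.subsetUl ?finset.subsetUr.
apply: ge_ereal_sup => _ [w wpos <-].
set K := Order.max (kappa R V1 E1) (kappa R V2 E2).
have [w1 [w2 [D1 Dip]]] := split_ip w wf1 wf2 cl1 cl2 card3.
have Vp := Vpos wfG wpos.
have key : forall u : 'I_N -> 'rV[R]_#|V1 :|: V2|, unitV (V1 :|: V2) u ->
    ((\sum_(p in E1 :|: E2) w p * dotv (u p.1) (u p.2))%:E
       <= K * (ip (V1 :|: V2) (E1 :|: E2) w)%:E)%E.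
  move=> u hu.
  have hu1 : unitV V1 u by move=> i iV; apply: hu; rewrite inE iV.
  have hu2 : unitV V2 u by move=> i iV; apply: hu; rewrite inE iV orbT.
  rewrite D1 EFinD -Dip EFinD ge0_muleDr ?lee_fin ?ip_ge0 //.
  apply: leeD.
    apply: (le_trans (kappa_bound w1 wf1 hu1)); apply: lee_wpmul2r.
      by rewrite lee_fin ip_ge0.
    by rewrite le_max lexx.
  apply: (le_trans (kappa_bound w2 wf2 hu2)); apply: lee_wpmul2r.
    by rewrite lee_fin ip_ge0.
  by rewrite le_max lexx orbT.
have [e He] := pad R Vp.
have hu0 : unitV (V1 :|: V2) (fun _ : 'I_N => e (const_mx 1)).
  by move=> i _; rewrite He dotv_const mulr1.
move: key; case: K => [k| |] key.
- rewrite lee_fin ler_pdivrMr //; apply: (sdp_le wfG Vp) => u hu.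
  by have := key u hu; rewrite -EFinM lee_fin.
- exact: leey.
- exfalso; have := key _ hu0.
  by rewrite gt0_mulNye ?lte_fin // leeNy_eq.
Qed.
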